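(* For every countable two-sorted ultrametric space $X$ there is a topological group embedding $\mathrm{Aut}(X)\to\mathrm{Aut}(\mathbb U)$.
   Context: A two-sorted ultrametric space is $(X,d_X,D_X)$ with $D_X$ a linear order with least element $0$, $d_X\colon X\times X\to D_X$ symmetric, $d_X(x,y)=0\iff x=y$, $d_X(x,z)\le\max\{d_X(x,y),d_X(y,z)\}$; countable if both $X$ and $D_X$ are countable. $\mathrm{Aut}(X)$ is the group of dc-automorphisms (bijections $f$ of $X$ with an order automorphism $D_f$ of $D_X$ with $d(f(x),f(y))=D_f(d(x,y))$) with the topology of pointwise convergence on both sorts (both viewed as discrete). $\mathbb U$ is the countable rational Urysohn ultrametric space viewed as a two-sorted space with distance set $\mathbb Q_{\ge0}$ (equivalently the Fraïssé limit of finite two-sorted ultrametric spaces with dc-embeddings). *)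

(* Defs.v *)
From mathcomp Require Import all_boot all_order all_algebra.
Set Implicit Arguments. Unset Strict Implicit. Unset Printing Implicit Defensive.
Import Order.TTheory GRing.Theory Num.Theory.
Local Open Scope ring_scope.

(* membership in a list, for arbitrary (not necessarily eqType) carriers *)
Fixpoint lmem (T : Type) (x : T) (s : seq T) : Prop :=
  match s with nil => False | y :: s' => y = x \/ lmem x s' end.

(* Two-sorted ultrametric space (X, d_X, D_X): D_X a linear order with least
   element 0, d symmetric, d x y = 0 <-> x = y, d x z <= max (d x y) (d y z)
   (in a linear order: d x z <= d x y  or  d x z <= d y z). *)
Record TSUM := {
  pt : Type;
  dst : Type;
  dle : dst -> dst -> Prop;
  d0 : dst;
  dist : pt -> pt -> dst;
  dle_refl : forall a, dle a a;
  dle_antisym : forall a b, dle a b -> dle b a -> a = b;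
  dle_trans : forall a b c, dle a b -> dle b c -> dle a c;
  dle_total : forall a b, dle a b \/ dle b a;
  d0_least : forall a, dle d0 a;
  dist_sym : forall x y, dist x y = dist y x;
  dist_eq0 : forall x y, dist x y = d0 <-> x = y;
  dist_ultra : forall x y z, dle (dist x z) (dist x y) \/ dle (dist x z) (dist y z)
}.

Definition countable_TSUM (X : TSUM) : Prop :=
  (exists e : pt X -> nat, injective e) /\ (exists e : dst X -> nat, injective e).

Record dcAut (X : TSUM) := {
  af : pt X -> pt X;
  ad : dst X -> dst X;
  af_bij : bijective af;
  ad_bij : bijective ad;
  ad_order : forall a b, dle a b <-> dle (ad a) (ad b);
  af_dist : forall x y, dist (af x) (af y) = ad (dist x y)
}.

Definition aut_eq (X : TSUM) (p q : dcAut X) : Prop :=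
  af p =1 af q /\ ad p =1 ad q.

(* basic neighbourhoods of the topology of pointwise convergence on both
   (discrete) sorts: agreement on finite sets of points and of distances *)
Definition agree (X : TSUM) (F : seq (pt X)) (E : seq (dst X)) (p q : dcAut X) : Prop :=
  (forall x, lmem x F -> af p x = af q x) /\ (forall a, lmem a E -> ad p a = ad q a).

Definition aut_hom (X Y : TSUM) (Phi : dcAut X -> dcAut Y) : Prop :=
  forall p q r : dcAut X,
    af r =1 af p \o af q -> ad r =1 ad p \o ad q ->
    af (Phi r) =1 af (Phi p) \o af (Phi q) /\ ad (Phi r) =1 ad (Phi p) \o ad (Phi q).

Definition aut_continuous (X Y : TSUM) (Phi : dcAut X -> dcAut Y) : Prop :=
  forall (p : dcAut X) (F : seq (pt Y)) (E : seq (dst Y)),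
    exists (F' : seq (pt X)) (E' : seq (dst X)),
      forall q, agree F' E' p q -> agree F E (Phi p) (Phi q).

(* Phi is a homeomorphism onto its image (subspace topology) *)
Definition aut_open_onto_image (X Y : TSUM) (Phi : dcAut X -> dcAut Y) : Prop :=
  forall (p : dcAut X) (F' : seq (pt X)) (E' : seq (dst X)),
    exists (F : seq (pt Y)) (E : seq (dst Y)),
      forall q, agree F E (Phi p) (Phi q) -> agree F' E' p q.

Definition top_group_embedding (X Y : TSUM) (Phi : dcAut X -> dcAut Y) : Prop :=
  [/\ aut_hom Phi,
      (forall p q, aut_eq (Phi p) (Phi q) -> aut_eq p q),
      aut_continuous Phi &
      aut_open_onto_image Phi].

(* The countable rational Urysohn ultrametric space: a countable ultrametric
   space with rational distances having the one-point extension property for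
   finite subsets (this characterizes it up to isometry). *)
Record RUU := {
  upt : Type;
  ud : upt -> upt -> rat;
  upt_countable : exists e : upt -> nat, injective e;
  ud_ge0 : forall x y, 0 <= ud x y;
  ud_eq0 : forall x y, ud x y = 0 <-> x = y;
  ud_sym : forall x y, ud x y = ud y x;
  ud_ultra : forall x y z, ud x z <= Num.max (ud x y) (ud y z);
  ud_ext : forall (A : seq upt) (r : upt -> rat),
      (forall a, lmem a A -> 0 < r a) ->
      (forall a b, lmem a A -> lmem b A -> ud a b <= Num.max (r a) (r b)) ->
      (forall a b, lmem a A -> lmem b A -> r a <= Num.max (ud a b) (r b)) ->
      exists z, forall a, lmem a A -> ud z a = r a
}.

Definition Qnn := {q : rat | 0 <= q}.

Definition Qnn0 : Qnn := exist (fun q : rat => is_true (0 <= q)) 0 (lexx 0).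

Definition RUU_dist (U : RUU) (x y : upt U) : Qnn :=
  exist (fun q : rat => is_true (0 <= q)) (ud x y) (ud_ge0 x y).

Definition Qnn_le (a b : Qnn) : Prop := proj1_sig a <= proj1_sig b.

Lemma Qnn_eq (a b : Qnn) : proj1_sig a = proj1_sig b -> a = b.
Proof.
case: a b => a Ha [b Hb] /= E; subst b; congr exist; exact: bool_irrelevance.
Qed.

Definition RUU_TSUM (U : RUU) : TSUM.
Proof.
refine (@Build_TSUM (upt U) Qnn Qnn_le Qnn0 (@RUU_dist U) _ _ _ _ _ _ _ _).
- by move=> a; rewrite /Qnn_le lexx.
- move=> a b; rewrite /Qnn_le => H1 H2; apply: Qnn_eq; apply/eqP.
  by rewrite eq_le H1 H2.
- by move=> a b c; rewrite /Qnn_le; apply: le_trans.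
- by move=> a b; rewrite /Qnn_le; case: (leP (proj1_sig a) (proj1_sig b)) => H;
    [left|right; exact: ltW].
- by case=> a Ha; rewrite /Qnn_le.
- by move=> x y; apply: Qnn_eq; rewrite /= ud_sym.
- move=> x y; split.
  + by move=> H; apply/ud_eq0; move: (f_equal (@proj1_sig _ _) H).
  + by move=> H; apply: Qnn_eq => /=; apply/ud_eq0.
- move=> x y z; rewrite /Qnn_le /=; have := @ud_ultra U x y z.
  by rewrite le_max => /orP[]; [left|right].
Defined.

(* Main.v *)
Require Import Defs.
From mathcomp Require Import all_boot all_order all_algebra.
From Stdlib Require Import Classical ClassicalEpsilon.
Set Implicit Arguments. Unset Strict Implicit. Unset Printing Implicit Defensive.
Import Order.TTheory GRing.Theory Num.Theory.
Local Open Scope ring_scope.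

Definition choose_or {T} (Q : T -> Prop) (t0 : T) : T :=
  match excluded_middle_informative (exists x, Q x) with
  | left H => proj1_sig (constructive_indefinite_description _ H)
  | right _ => t0 end.
Lemma choose_orP T (Q : T -> Prop) t0 : (exists x, Q x) -> Q (choose_or Q t0).
Proof. rewrite /choose_or; case: excluded_middle_informative => // H _; exact: proj2_sig _. Qed.

Lemma lmem_map (A B : Type) (f : A -> B) (b : B) (s : seq A) :
  lmem b (map f s) <-> exists a, lmem a s /\ f a = b.
Proof.
elim: s => [|a s IH] /=; first by split => [[]|[a [[] _]]].
split.
- case=> [<-|H]; first by exists a; split => //; left.
  have [a' [H1 H2]] := proj1 IH H.
  by exists a'; split => //; right.
- case=> a' [[E|H] E']; first by left; rewrite -E'  E.
  by right; apply: (proj2 IH); exists a'.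
Qed.

Lemma lmem_cat (A : Type) (a : A) s1 s2 : lmem a (s1 ++ s2) <-> lmem a s1 \/ lmem a s2.
Proof.
elim: s1 => [|b s IH] /=; first by split => [|[[]|]]; [right|].
by rewrite IH; tauto.
Qed.

Lemma choose_or_or T (Q : T -> Prop) t0 : Q (choose_or Q t0) \/ choose_or Q t0 = t0.
Proof.
rewrite /choose_or; case: excluded_middle_informative => H; last by right.
by left; exact: proj2_sig _.
Qed.

Section UU.
Variable U : RUU.
Local Notation P := (upt U).
Local Notation d := (@ud U).

Lemma d_lt x y z r : d x y < r -> d y z < r -> d x z < r.
Proof. move=> H1 H2; apply: le_lt_trans (ud_ultra x y z) _; by rewrite gt_max H1 H2. Qed.

Lemma d_le x y z r : d x y <= r -> d y z <= r -> d x z <= r.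
Proof. move=> H1 H2; apply: le_trans (ud_ultra x y z) _; by rewrite ge_max H1 H2. Qed.

Lemma d_iso x y z : d x y < d x z -> d y z = d x z.
Proof.
move=> H; apply/eqP; rewrite eq_le; apply/andP; split.
- apply: le_trans (ud_ultra y x z) _; rewrite ge_max lexx andbT ud_sym; exact: ltW.
- have := ud_ultra x y z; rewrite le_max => /orP[H'|//].
  by move: (lt_le_trans H H'); rewrite ltxx.
Qed.

Lemma d_self x : d x x = 0.
Proof. exact/ud_eq0. Qed.

Definition ball (u a : P) := d a u < 1.

Lemma ball_c u : ball u u.
Proof. by rewrite /ball d_self. Qed.

Lemma ball_d u a b : ball u a -> ball u b -> d a b < 1.
Proof. move=> Ha Hb; apply: (d_lt Ha); by rewrite ud_sym. Qed.


Lemma U_inhab : exists z : P, True.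
Proof.
have [z _] := @ud_ext U [::] (fun _ => 0) (fun a H => match H with end)
  (fun a b H => match H with end) (fun a b H => match H with end).
by exists z.
Qed.

Definition pt0 : P := proj1_sig (constructive_indefinite_description _ U_inhab).

Fixpoint cs (n : nat) : seq P :=
  if n is n'.+1 then choose_or (fun z => forall a, lmem a (cs n') -> d z a = 1) pt0 :: cs n'
  else [::].

Definition c n := choose_or (fun z => forall a, lmem a (cs n) -> d z a = 1) pt0.

Lemma cs_mem n a : lmem a (cs n) <-> exists i, (i < n)%N /\ a = c i.
Proof.
elim: n => [|n IH] /=; first by split => [[]|[i []]].
split.
- case=> [<-|/(proj1 IH) [i [H1 H2]]]; first by exists n.
  by exists i; split => //; apply: ltnW.
- case=> i [Hi Ea]; rewrite ltnS leq_eqVlt in Hi; case/orP: Hi => [/eqP Ei|Hi].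
  + by left; rewrite Ea Ei.
  + by right; apply: (proj2 IH); exists i.
Qed.

Lemma c_dist_aux n : forall m, (m <= n)%N -> forall i, (i < m)%N -> d (c m) (c i) = 1.
Proof.
elim: n => [|n IH] m Hm.
  by move=> i; rewrite (leqn0 m) in Hm; rewrite (eqP Hm).
rewrite leq_eqVlt in Hm; case/orP: Hm => [/eqP ->|Hm]; last by apply: IH.
move=> i Hi.
have Hex : exists z, forall a, lmem a (cs n.+1) -> d z a = 1.
  apply: (@ud_ext U (cs n.+1) (fun _ => 1) (fun _ _ => ltr01)).
  - move=> a b /(proj1 (cs_mem _ _)) [j [Hj ->]] /(proj1 (cs_mem _ _)) [k [Hk ->]].
    rewrite maxxx; case: (ltngtP j k) => Hjk.
    + by rewrite ud_sym IH.
    + by rewrite IH.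
    + by rewrite Hjk d_self ler01.
  - by move=> a b _ _; rewrite le_max lexx orbT.
have := choose_orP pt0 Hex; rewrite -/(c n.+1) => H; apply: H.
by apply: (proj2 (cs_mem _ _)); exists i.
Qed.

Lemma c_dist i j : i <> j -> d (c i) (c j) = 1.
Proof.
case: (ltngtP i j) => H // _.
- by rewrite ud_sym (@c_dist_aux j).
- by rewrite (@c_dist_aux i).
Qed.

End UU.

Section BF.
Variable U : RUU.
Local Notation P := (upt U).
Local Notation d := (@ud U).
Local Notation ball := (@ball U).
Variable e : P -> nat.
Hypothesis e_inj : injective e.

Definition Inv (u v : P) (l : seq (P * P)) :=
  (forall ab, lmem ab l -> ball u ab.1 /\ ball v ab.2) /\
  (forall ab ab', lmem ab l -> lmem ab' l -> d ab.1 ab'.1 = d ab.2 ab'.2).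

Fixpoint lk (b : P) (l : seq (P * P)) (dft : P) : P :=
  match l with
  | [::] => dft
  | ab :: l' => if excluded_middle_informative (ab.2 = b) then ab.1 else lk b l' dft
  end.

Lemma lk_mem b l dft : lmem b (map snd l) -> lmem (lk b l dft, b) l.
Proof.
elim: l => [|ab l IH] //= H.
case: excluded_middle_informative => E.
  by left; case: ab E {H} => a b' /= ->.
right; apply: IH; case: H => // E'; by case: E.
Qed.

Lemma forth u v l x : Inv u v l -> ball u x -> exists y, Inv u v ((x, y) :: l).
Proof.
move=> [HI1 HI2] Hx.
suff : exists y, ball v y /\ forall ab, lmem ab l -> d x ab.1 = d y ab.2.
  case=> y [Hy Hd]; exists y; split.
  - by move=> ab [<-|H] //; exact: HI1.
  - move=> ab ab' [<-|H] [<-|H'] /=; rewrite ?d_self //.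
    + exact: (Hd _ H').
    + by rewrite ud_sym (ud_sym ab.2); exact: (Hd _ H).
    + exact: (HI2 _ _ H H').
case: (classic (exists ab, lmem ab l /\ ab.1 = x)) => [[ab [Hab Ex]]|Hn].
  exists ab.2; split; first exact: (HI1 _ Hab).2.
  by move=> ab' H'; rewrite -Ex; exact: HI2.
case El: l => [|ab0 l0].
  by exists v; split; [exact: ball_c | move=> ab []].
rewrite -El.
have Hab0 : lmem ab0 l by rewrite El; left.
pose r := fun b => d x (lk b l x).
have Hr : forall ab, lmem ab l -> r ab.2 = d x ab.1.
  move=> ab Hab; rewrite /r.
  have Hm : lmem (lk ab.2 l x, ab.2) l.
    apply: lk_mem; apply: (proj2 (lmem_map _ _ _)); by exists ab.
  have := HI2 _ _ Hm Hab; rewrite /= d_self => /ud_eq0 ->. done.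
have [z Hz] : exists z, forall a, lmem a (map snd l) -> d z a = r a.
  apply: ud_ext.
- move=> b /(proj1 (lmem_map _ _ _)) [ab [Hab <-]]; rewrite Hr //.
  rewrite lt_def ud_ge0 andbT; apply/eqP => /ud_eq0 E.
  by apply: Hn; exists ab; split.
- move=> b b' /(proj1 (lmem_map _ _ _)) [ab [Hab <-]] /(proj1 (lmem_map _ _ _)) [ab' [Hab' <-]].
  rewrite !Hr // -HI2 //; have := ud_ultra ab.1 x ab'.1; by rewrite [d ab.1 x]ud_sym.
- move=> b b' /(proj1 (lmem_map _ _ _)) [ab [Hab <-]] /(proj1 (lmem_map _ _ _)) [ab' [Hab' <-]].
  rewrite !Hr // -HI2 //; have := ud_ultra x ab'.1 ab.1; by rewrite maxC [d ab'.1 ab.1]ud_sym.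
exists z; split.
- have Hz0 : d z ab0.2 < 1.
    rewrite Hz; last by apply: (proj2 (lmem_map _ _ _)); exists ab0.
    rewrite Hr //; apply: ball_d Hx (HI1 _ Hab0).1.
  exact: d_lt Hz0 (HI1 _ Hab0).2.
- move=> ab Hab; rewrite Hz; first by rewrite Hr.
  by apply: (proj2 (lmem_map _ _ _)); exists ab.
Qed.

Definition sw (ab : P * P) := (ab.2, ab.1).

Lemma Inv_swap u v l : Inv u v l -> Inv v u (map sw l).
Proof.
move=> [H1 H2]; split.
- move=> ab /(proj1 (lmem_map _ _ _)) [ab' [H <-]] /=; have := H1 _ H; tauto.
- move=> ab ab2 /(proj1 (lmem_map _ _ _)) [a1 [Ha1 <-]] /(proj1 (lmem_map _ _ _)) [a2 [Ha2 <-]] /=.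
  by rewrite H2.
Qed.

Lemma swK l : map sw (map sw l) = l.
Proof. by elim: l => //= [[a b] l ->]. Qed.

Lemma back u v l y : Inv u v l -> ball v y -> exists x, Inv u v ((x, y) :: l).
Proof.
move=> HI Hy; have [x Hx] := forth (Inv_swap HI) Hy.
exists x; have := Inv_swap Hx; by rewrite /= swK.
Qed.

Definition en u k := choose_or (fun a => ball u a /\ e a = k) u.

Lemma en_ball u k : ball u (en u k).
Proof. rewrite /en; case: (choose_or_or (fun a => ball u a /\ e a = k) u) => [[H _]|->] //; exact: ball_c. Qed.

Lemma en_surj u a : ball u a -> en u (e a) = a.
Proof.
move=> Ha; have := @choose_orP _ (fun a' => ball u a' /\ e a' = e a) u (ex_intro _ a (conj Ha erefl)).
by rewrite -/(en u (e a)) => -[_ /e_inj].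
Qed.

Section Chain.
Variables u v : P.

Fixpoint ch (n : nat) : seq (P * P) :=
  if n is n'.+1 then
    let l := ch n' in
    let x := en u n' in
    let l1 := (x, choose_or (fun y => Inv u v ((x, y) :: l)) v) :: l in
    let y := en v n' in
    (choose_or (fun x => Inv u v ((x, y) :: l1)) u, y) :: l1
  else [::].

Lemma ch_inv n : Inv u v (ch n).
Proof.
elim: n => [|n IH] /=; first by split => ab [].
pose l1 := (en u n, choose_or (fun y => Inv u v ((en u n, y) :: ch n)) v) :: ch n.
have H1 : Inv u v l1.
  apply: (@choose_orP _ (fun y => Inv u v ((en u n, y) :: ch n)) v).
  exact: forth IH (en_ball u n).
apply: (@choose_orP _ (fun x => Inv u v ((x, en v n) :: l1)) u).
exact: back H1 (en_ball v n).
Qed.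

Lemma ch_mono m n ab : (m <= n)%N -> lmem ab (ch m) -> lmem ab (ch n).
Proof.
elim: n => [|n IH] Hmn H.
  by rewrite leqn0 in Hmn; rewrite -(eqP Hmn).
rewrite leq_eqVlt in Hmn; case/orP: Hmn => [/eqP <-|Hmn] //.
by right; right; apply: IH.
Qed.

Definition Rel a b := exists n, lmem (a, b) (ch n).

Lemma Rel_common a b a' b' : Rel a b -> Rel a' b' ->
  exists n, lmem (a, b) (ch n) /\ lmem (a', b') (ch n).
Proof.
move=> [n H] [n' H']; exists (maxn n n'); split.
- by apply: ch_mono H; rewrite leq_maxl.
- by apply: ch_mono H'; rewrite leq_maxr.
Qed.

Lemma Rel_dist a b a' b' : Rel a b -> Rel a' b' -> d a a' = d b b'.
Proof.
move=> H H'; have [n [Hn Hn']] := Rel_common H H'.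
exact: (ch_inv n).2 _ _ Hn Hn'.
Qed.

Lemma Rel_ball a b : Rel a b -> ball u a /\ ball v b.
Proof. by move=> [n H]; exact: (ch_inv n).1 _ H. Qed.

Lemma Rel_tot a : ball u a -> exists b, Rel a b.
Proof.
move=> Ha; rewrite -(en_surj Ha).
by eexists; exists (e a).+1; right; left.
Qed.

Lemma Rel_sur b : ball v b -> exists a, Rel a b.
Proof.
move=> Hb; rewrite -(en_surj Hb).
by eexists; exists (e b).+1; left.
Qed.

End Chain.

Lemma bf u v : exists h k : P -> P,
  [/\ (forall a, ball u a -> ball v (h a) /\ k (h a) = a),
      (forall b, ball v b -> ball u (k b) /\ h (k b) = b) &
      (forall a a', ball u a -> ball u a' -> d (h a) (h a') = d a a')].
Proof.
pose h a := choose_or (fun b => Rel u v a b) a.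
pose k b := choose_or (fun a => Rel u v a b) b.
have Hh a : ball u a -> Rel u v a (h a) by move=> Ha; apply: (@choose_orP _ (fun b => Rel u v a b) a); exact: Rel_tot.
have Hk b : ball v b -> Rel u v (k b) b by move=> Hb; apply: (@choose_orP _ (fun a => Rel u v a b) b); exact: Rel_sur.
exists h, k; split.
- move=> a Ha; have Hr := Hh a Ha; have Hb := (Rel_ball Hr).2; split => //.
  have Hr' := Hk _ Hb; have := Rel_dist Hr' Hr; by rewrite d_self => /ud_eq0.
- move=> b Hb; have Hr := Hk b Hb; have Ha := (Rel_ball Hr).1; split => //.
  have Hr' := Hh _ Ha; have := Rel_dist Hr Hr'; rewrite d_self => /esym /ud_eq0.
  done.
- move=> a a' Ha Ha'; symmetry; exact: Rel_dist (Hh _ Ha) (Hh _ Ha').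
Qed.

End BF.

Section G.
Variable U : RUU.
Local Notation P := (upt U).
Local Notation d := (@ud U).
Local Notation ball := (@ball U).
Local Notation c := (@c U).
Variables hh kk : nat -> P -> P.
Hypothesis Hhk : forall n,
  [/\ (forall a, ball (c 0) a -> ball (c n) (hh n a) /\ kk n (hh n a) = a),
      (forall b, ball (c n) b -> ball (c 0) (kk n b) /\ hh n (kk n b) = b) &
      (forall a a', ball (c 0) a -> ball (c 0) a' -> d (hh n a) (hh n a') = d a a')].

Lemma ball_uniq n m y : ball (c n) y -> ball (c m) y -> n = m.
Proof.
move=> Hn Hm; apply: NNPP => Hnm.
have := @c_dist U _ _ Hnm; have : d (c n) (c m) < 1 by apply: d_lt Hm; rewrite ud_sym.
by move=> H E; rewrite E ltxx in H.
Qed.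

Lemma kk_iso n b b' : ball (c n) b -> ball (c n) b' -> d (kk n b) (kk n b') = d b b'.
Proof.
move=> Hb Hb'; have [_ H2 H3] := Hhk n.
have [Kb Eb] := H2 _ Hb; have [Kb' Eb'] := H2 _ Hb'.
by rewrite -{2}Eb -{2}Eb' H3.
Qed.

Definition idx (y : P) : option nat :=
  match excluded_middle_informative (exists n, ball (c n) y) with
  | left H => Some (proj1_sig (constructive_indefinite_description _ H))
  | right _ => None
  end.

Lemma idxP y : (exists n, ball (c n) y /\ idx y = Some n) \/
               ((forall n, ~ ball (c n) y) /\ idx y = None).
Proof.
rewrite /idx; case: excluded_middle_informative => H.
- left; exists (proj1_sig (constructive_indefinite_description _ H)); split => //.
  exact: (proj2_sig (constructive_indefinite_description _ H)).
- by right; split => // n Hn; apply: H; exists n.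
Qed.

Lemma idx_some n y : ball (c n) y -> idx y = Some n.
Proof.
move=> Hn; case: (idxP y) => [[m [Hm ->]]|[H _]].
- by rewrite (ball_uniq Hm Hn).
- by case: (H n).
Qed.

Definition g (s : nat -> nat) (y : P) : P :=
  match idx y with Some n => hh (s n) (kk n y) | None => y end.

Lemma g_ball s n y : ball (c n) y -> ball (c (s n)) (g s y) /\ g s y = hh (s n) (kk n y).
Proof.
move=> Hy; rewrite /g (idx_some Hy); split => //.
have [H1 H2 _] := Hhk (s n); have [_ H2' _] := Hhk n.
exact: (H1 _ (H2' _ Hy).1).1.
Qed.

Lemma g_none s y : (forall n, ~ ball (c n) y) -> g s y = y.
Proof. move=> H; rewrite /g; case: (idxP y) => [[n [Hn _]]|[_ ->]] //; by case: (H n). Qed.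

Lemma g_comp s t y : g (fun n => s (t n)) y = g s (g t y).
Proof.
case: (idxP y) => [[n [Hn _]]|[H _]]; last by rewrite !g_none.
have [Hb Ey] := g_ball t Hn; have [_ Ey'] := g_ball s Hb.
rewrite Ey' Ey; have [_ E2] := g_ball (fun n => s (t n)) Hn; rewrite E2.
have [H1 H2 _] := Hhk (t n); have [_ H2' _] := Hhk n.
by rewrite (H1 _ (H2' _ Hn).1).2.
Qed.

Lemma g_id y : g (fun n => n) y = y.
Proof.
case: (idxP y) => [[n [Hn _]]|[H _]]; last by rewrite !g_none.
have [_ E] := g_ball (fun n => n) Hn; rewrite E.
have [_ H2 _] := Hhk n; exact: (H2 _ Hn).2.
Qed.

Lemma g_ext s t : s =1 t -> g s =1 g t.
Proof. by move=> E y; rewrite /g; case: (idx y) => // n; rewrite E. Qed.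

Lemma cross n m y z : ball (c n) y -> ball (c m) z -> n <> m -> d y z = 1.
Proof.
move=> Hy Hz Hnm.
have E1 : d y (c m) = 1.
  rewrite -(@c_dist U _ _ Hnm); apply: d_iso; rewrite (@c_dist U _ _ Hnm) ud_sym; exact: Hy.
have H : d (c m) z < d (c m) y by rewrite (ud_sym _ y) E1 ud_sym.
by rewrite ud_sym (d_iso H) ud_sym.
Qed.

Lemma cz n z : (forall m, ~ ball (c m) z) -> d (c n) z = d (c 0) z.
Proof.
move=> Hz; case: (eqVneq n 0) => [->//|Hn0].
have Hn : (n <> 0)%N by move=> E; rewrite E eqxx in Hn0.
have Ge : forall m, 1 <= d (c m) z by move=> m; rewrite leNgt ud_sym; apply/negP; exact: Hz.
have Dn0 := @c_dist U _ _ Hn.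
case: (ltrgtP 1 (d (c n) z)) => H.
- symmetry; apply: d_iso; by rewrite Dn0.
- by have := Ge n; rewrite leNgt H.
- apply/eqP; rewrite eq_le -H Ge /=.
  apply: le_trans (ud_ultra (c 0) (c n) z) _; by rewrite ud_sym Dn0 -H maxxx.
Qed.

Lemma out n y z : ball (c n) y -> (forall m, ~ ball (c m) z) -> d y z = d (c 0) z.
Proof.
move=> Hy Hz; rewrite -(cz n Hz); apply: d_iso.
apply: lt_le_trans (_ : 1 <= _); first by rewrite ud_sym.
by rewrite leNgt ud_sym; apply/negP; exact: Hz.
Qed.

Lemma g_iso s : injective s -> forall y z, d (g s y) (g s z) = d y z.
Proof.
move=> Hs y z.
case: (idxP y) => [[n [Hn _]]|[Hy _]]; case: (idxP z) => [[m [Hm _]]|[Hz _]].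
- have [Gy Ey] := g_ball s Hn; have [Gz Ez] := g_ball s Hm.
  case: (eqVneq n m) => [E|Nnm].
  + subst m; rewrite Ey Ez; have [H1 H2 H3] := Hhk (s n); have [_ K2 _] := Hhk n.
    rewrite H3; [exact: kk_iso Hn Hm | exact: (K2 _ Hn).1 | exact: (K2 _ Hm).1].
  + have Nnm' : n <> m by move=> E; rewrite E eqxx in Nnm.
    rewrite (cross Hn Hm Nnm') (cross Gy Gz) // => /Hs; exact: Nnm'.
- have [Gy1 _] := g_ball s Hn; rewrite (g_none s Hz) (out Gy1 Hz); by rewrite (out Hn Hz).
- have [Gz1 _] := g_ball s Hm; rewrite (g_none s Hy) ud_sym (out Gz1 Hy); by rewrite (ud_sym y z) (out Hm Hy).
- by rewrite !g_none.
Qed.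

Lemma g_c s n : ball (c (s n)) (g s (c n)).
Proof. exact: (g_ball s (ball_c (c n))).1. Qed.

Lemma g_det s t n : g s (c n) = g t (c n) -> s n = t n.
Proof.
move=> E; apply: (@ball_uniq _ _ (g s (c n))); first exact: g_c.
by rewrite E; exact: g_c.
Qed.

Lemma g_loc s t y n : ball (c n) y -> s n = t n -> g s y = g t y.
Proof. by move=> Hy E; rewrite (g_ball s Hy).2 (g_ball t Hy).2 E. Qed.

End G.

Section Emb.
Variable X : TSUM.
Variable U : RUU.
Local Notation P := (upt U).
Local Notation d := (@ud U).
Local Notation ball := (@ball U).
Local Notation c := (@c U).
Local Notation Y := (pt X + dst X)%type.
Variable eY : Y -> nat.
Hypothesis HeY : injective eY.
Variables hh kk : nat -> P -> P.
Hypothesis Hhk : forall n,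
  [/\ (forall a, ball (c 0) a -> ball (c n) (hh n a) /\ kk n (hh n a) = a),
      (forall b, ball (c n) b -> ball (c 0) (kk n b) /\ hh n (kk n b) = b) &
      (forall a a', ball (c 0) a -> ball (c 0) a' -> d (hh n a) (hh n a') = d a a')].

Definition actY (p : dcAut X) (y : Y) : Y :=
  match y with inl x => inl (af p x) | inr a => inr (ad p a) end.

Definition dec (n : nat) : option Y :=
  match excluded_middle_informative (exists y, eY y = n) with
  | left H => Some (proj1_sig (constructive_indefinite_description _ H))
  | right _ => None
  end.

Lemma decP n : (exists y, n = eY y /\ dec n = Some y) \/ (dec n = None).
Proof.
rewrite /dec; case: excluded_middle_informative => H; last by right.
left; exists (proj1_sig (constructive_indefinite_description _ H)); split => //.
by rewrite (proj2_sig (constructive_indefinite_description _ H)).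
Qed.

Lemma dec_e y : dec (eY y) = Some y.
Proof.
case: (decP (eY y)) => [[y' [/HeY -> ->]]//|].
rewrite /dec; case: excluded_middle_informative => // H; case: H; by exists y.
Qed.

Definition sg (f : Y -> Y) (n : nat) : nat :=
  match dec n with Some y => eY (f y) | None => n end.

Lemma sg_e f y : sg f (eY y) = eY (f y).
Proof. by rewrite /sg dec_e. Qed.

Lemma sg_comp f f' n : sg (fun y => f (f' y)) n = sg f (sg f' n).
Proof.
case: (decP n) => [[y [-> _]]|E]; first by rewrite !sg_e.
by rewrite /sg E E.
Qed.

Lemma sg_idf f n : (forall y, f y = y) -> sg f n = n.
Proof. move=> H; case: (decP n) => [[y [-> _]]|E]; first by rewrite sg_e H. by rewrite /sg E. Qed.

Lemma sg_ext f f' n : (forall y, f y = f' y) -> sg f n = sg f' n.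
Proof. by move=> H; rewrite /sg; case: (dec n) => // y; rewrite H. Qed.

Lemma actY_bij p : exists f', cancel (actY p) f' /\ cancel f' (actY p).
Proof.
case: (af_bij p) => f1 c1 c2; case: (ad_bij p) => f2 c3 c4.
exists (fun y => match y with inl x => inl (f1 x) | inr a => inr (f2 a) end).
by split; case => x /=; rewrite ?c1 ?c2 ?c3 ?c4.
Qed.

Definition sgp (p : dcAut X) := sg (actY p).

Lemma sgp_bij p : exists s', cancel (sgp p) s' /\ cancel s' (sgp p).
Proof.
have [f' [c1 c2]] := actY_bij p; exists (sg f'); split => n.
- by rewrite /sgp -sg_comp sg_idf.
- by rewrite /sgp -sg_comp sg_idf.
Qed.

Lemma g_bij p : bijective (g hh kk (sgp p)).
Proof.
have [s' [c1 c2]] := sgp_bij p.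
exists (g hh kk s') => y; rewrite -(g_comp Hhk).
- by rewrite (@g_ext _ hh kk _ (fun n => n)) // (g_id Hhk).
- by rewrite (@g_ext _ hh kk _ (fun n => n)) // (g_id Hhk).
Qed.

Lemma sgp_inj p : injective (sgp p).
Proof. have [s' [c1 _]] := sgp_bij p; exact: can_inj c1. Qed.

Lemma Phi_dist p (x y : upt U) :
  @RUU_dist U (g hh kk (sgp p) x) (g hh kk (sgp p) y) = id (@RUU_dist U x y).
Proof. apply: Qnn_eq => /=; apply: (g_iso Hhk); exact: sgp_inj. Qed.

Definition Phi (p : dcAut X) : dcAut (RUU_TSUM U) :=
  @Build_dcAut (RUU_TSUM U) (g hh kk (sgp p)) id (g_bij p)
    (Bijective (fun _ => erefl) (fun _ => erefl)) (fun a b => conj id id) (@Phi_dist p).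

Lemma Phi_hom : aut_hom Phi.
Proof.
move=> p q r Haf Had; split => // y /=.
rewrite -(g_comp Hhk); apply: g_ext => n; rewrite /sgp -sg_comp.
by apply: sg_ext; case => x /=; rewrite ?Haf ?Had.
Qed.

Lemma sgp_det p q n : g hh kk (sgp p) (c n) = g hh kk (sgp q) (c n) -> sgp p n = sgp q n.
Proof. exact: (g_det Hhk). Qed.

Lemma sgp_x p q x : sgp p (eY (inl x)) = sgp q (eY (inl x)) -> af p x = af q x.
Proof. by rewrite /sgp !sg_e => /HeY [->]. Qed.

Lemma sgp_a p q a : sgp p (eY (inr a)) = sgp q (eY (inr a)) -> ad p a = ad q a.
Proof. by rewrite /sgp !sg_e => /HeY [->]. Qed.

Lemma Phi_inj p q : aut_eq (Phi p) (Phi q) -> aut_eq p q.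
Proof.
move=> [H1 _]; split => [x|a].
- by apply: sgp_x; apply: sgp_det; apply: H1.
- by apply: sgp_a; apply: sgp_det; apply: H1.
Qed.

Lemma agree_cat (F1 F2 : seq (pt X)) (E1 E2 : seq (dst X)) (p q : dcAut X) :
  agree (F1 ++ F2) (E1 ++ E2) p q -> agree F1 E1 p q /\ agree F2 E2 p q.
Proof.
move=> [H1 H2]; split; split => z Hz.
- by apply: H1; apply: (proj2 (lmem_cat _ _ _)); left.
- by apply: H2; apply: (proj2 (lmem_cat _ _ _)); left.
- by apply: H1; apply: (proj2 (lmem_cat _ _ _)); right.
- by apply: H2; apply: (proj2 (lmem_cat _ _ _)); right.
Qed.

Lemma cont1 p y : exists F1 E1, forall q, agree F1 E1 p q ->
  g hh kk (sgp p) y = g hh kk (sgp q) y.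
Proof.
case: (idxP y) => [[n [Hn _]]|[Hy _]]; last first.
  by exists [::], [::] => q _; rewrite !g_none.
case: (decP n) => [[[x|a] [En _]]|E].
- exists [:: x], [::] => q [H1 _]; apply: (g_loc Hhk Hn).
  by rewrite En /sgp !sg_e /= H1 //; left.
- exists [::], [:: a] => q [_ H2]; apply: (g_loc Hhk Hn).
  by rewrite En /sgp !sg_e /= H2 //; left.
- exists [::], [::] => q _; apply: (g_loc Hhk Hn).
  by rewrite /sgp /sg E.
Qed.

Lemma Phi_cont : aut_continuous Phi.
Proof.
move=> p F E.
suff [F' [E' H]] : exists F' E', forall q, agree F' E' p q ->
    forall y, lmem y F -> g hh kk (sgp p) y = g hh kk (sgp q) y.
  by exists F', E' => q Hq; split => // y Hy; apply: H.
elim: F => [|y F [F' [E' IH]]]; first by exists [::], [::].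
have [F1 [E1 H1]] := cont1 p y.
exists (F1 ++ F'), (E1 ++ E') => q /agree_cat [Hq1 Hq2] z [<-|Hz].
- exact: H1.
- exact: IH.
Qed.

Lemma Phi_open : aut_open_onto_image Phi.
Proof.
move=> p F' E'.
exists (map (fun x => c (eY (inl x))) F' ++ map (fun a => c (eY (inr a))) E'), [::].
move=> q [H _]; split => [x Hx|a Ha].
- apply: sgp_x; apply: sgp_det; apply: H; apply: (proj2 (lmem_cat _ _ _)); left.
  by apply: (proj2 (lmem_map _ _ _)); exists x.
- apply: sgp_a; apply: sgp_det; apply: H; apply: (proj2 (lmem_cat _ _ _)); right.
  by apply: (proj2 (lmem_map _ _ _)); exists a.
Qed.

Lemma Phi_emb : top_group_embedding Phi.
Proof. split; [exact: Phi_hom | exact: Phi_inj | exact: Phi_cont | exact: Phi_open]. Qed.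

End Emb.

Theorem corollary4p13 (X : TSUM) (U : RUU) :
  countable_TSUM X ->
  exists Phi : dcAut X -> dcAut (RUU_TSUM U), top_group_embedding Phi.
Proof.
move=> [[eX HeX] [eD HeD]].
pose eY (y : (pt X + dst X)%type) :=
  match y with inl x => (eX x).*2 | inr a => (eD a).*2.+1 end.
have HeY : injective eY.
  case=> [x|a] [x'|a'] /= E.
  - by rewrite (HeX _ _ (double_inj E)).
  - by have := congr1 odd E; rewrite /= !odd_double.
  - by have := congr1 odd E; rewrite /= !odd_double.
  - by rewrite (HeD _ _ (double_inj (eq_add_S _ _ E))).
have [e He] := upt_countable U.
have Hbf := fun n => bf He (c U 0) (c U n).
pose hh n := proj1_sig (constructive_indefinite_description _ (Hbf n)).
pose kk n := proj1_sig (constructive_indefinite_description _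
               (proj2_sig (constructive_indefinite_description _ (Hbf n)))).
have Hhk : forall n, _ := fun n => proj2_sig (constructive_indefinite_description _
               (proj2_sig (constructive_indefinite_description _ (Hbf n)))).
exists (Phi HeY Hhk); exact: Phi_emb.
Qed.
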